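(* In the setting below with $\Phi_\lambda=\Phi_{+,\lambda}$, let $x^*\in\mathbb R^n$ with $\Theta(x^* )<\infty$, let $J_*:=\{i\in[r]:(Bx^*-b)_i\ne0\}$ and $\bar J_*:=[r]\setminus J_*$, and consider the convex program $$(\mathrm P_+)\qquad \min_x\ \Theta(x)\quad\text{s.t.}\quad (Bx-b)_{\bar J_*}\le0.$$ Then: (i) $x^*$ is a stationary point of (P) if and only if it is a KKT point of $(\mathrm P_+)$; (ii) $x^*$ is a local minimizer of $F$ if and only if it is a global minimizer of $(\mathrm P_+)$.
   Context: Let $f:\mathbb R^n\to(-\infty,\infty]$, $g:\mathbb R^m\to(-\infty,\infty]$ be proper, lsc and convex; $A\in\mathbb R^{m\times n}$, $B\in\mathbb R^{r\times n}$, $b\in\mathbb R^r$, $\lambda\in\mathbb R^r$, $\lambda>0$. $\Theta(x)=f(x)+g(Ax)$, $\Phi_{+,\lambda}(u)=\sum_{i=1}^r\lambda_i\mathbf 1_{\{u_i>0\}}$, and problem (P) is $\min_x F(x)=\Theta(x)+\Phi_{+,\lambda}(Bx-b)$. $\partial$ denotes the limiting (Mordukhovich) subdifferential (the usual convex subdifferential for convex functions); in particular $\partial\Phi_{+,\lambda}(u)=\{z\in\mathbb R^r: z_i\in\mathbb R_+\text{ if }u_i=0,\ z_i=0\text{ otherwise}\}$. A point $x^*$ is a stationary point of (P) if $0\in\partial f(x^* )+A^\top\partial g(Ax^* )+B^\top\partial\Phi_{+,\lambda}(Bx^*-b)$. A point $x$ is a KKT point of $(\mathrm P_+)$ if there exists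 $\zeta\in\mathbb R^{|\bar J_*|}_+$ with $0\in\partial f(x)+A^\top\partial g(Ax)+B_{\bar J_*:}^\top\zeta$ and $0\le\zeta\perp(Bx-b)_{\bar J_*}\le0$, where $B_{\bar J_*:}$ is the submatrix of rows of $B$ indexed by $\bar J_*$ and $u_{\bar J_*}$ the corresponding subvector. *)

(* Defs.v *)
From HB Require Import structures.
From mathcomp Require Import all_boot all_order all_algebra.
From mathcomp Require Import all_classical all_reals all_analysis.
Set Implicit Arguments. Unset Strict Implicit. Unset Printing Implicit Defensive.
Import Order.TTheory GRing.Theory Num.Theory.
Import numFieldNormedType.Exports.
Local Open Scope ring_scope.

Section Defs.
Variable R : realType.

Definition ip n (u v : 'cV[R]_n) : R := \sum_(i < n) u i ord0 * v i ord0.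

Local Open Scope ereal_scope.

Definition proper_fun n (f : 'cV[R]_n -> \bar R) :=
  (forall x, f x != -oo) /\ exists x, f x \is a fin_num.

Definition convex_efun n (f : 'cV[R]_n -> \bar R) :=
  forall (x y : 'cV[R]_n) (t : R), (0 < t < 1)%R ->
    f (t *: x + (1 - t) *: y)%R <= t%:E * f x + (1 - t)%:E * f y.

Definition csubdiff n (f : 'cV[R]_n -> \bar R) (x v : 'cV[R]_n) :=
  f x \is a fin_num /\
  forall y, f x + (ip v (y - x)%R)%:E <= f y.

Definition Phi_plus r (lam : 'cV[R]_r) (u : 'cV[R]_r) : R :=
  (\sum_(i < r) (if (0 < u i ord0)%R then lam i ord0 else 0))%R.

(* limiting subdifferential of Phi_{+,lambda}, as given in the paper *)
Definition subdiff_Phi_plus r (u z : 'cV[R]_r) :=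
  forall i : 'I_r, if u i ord0 == 0%R then (0 <= z i ord0)%R else z i ord0 == 0%R.

Definition Theta n m (f : 'cV[R]_n -> \bar R) (g : 'cV[R]_m -> \bar R)
  (A : 'M[R]_(m, n)) (x : 'cV[R]_n) : \bar R := f x + g (A *m x)%R.

Definition Fobj n m r (f : 'cV[R]_n -> \bar R) (g : 'cV[R]_m -> \bar R)
  (A : 'M[R]_(m, n)) (B : 'M[R]_(r, n)) (b lam : 'cV[R]_r) (x : 'cV[R]_n) :=
  Theta f g A x + (Phi_plus lam (B *m x - b)%R)%:E.

Definition stationary n m r (f : 'cV[R]_n -> \bar R) (g : 'cV[R]_m -> \bar R)
  (A : 'M[R]_(m, n)) (B : 'M[R]_(r, n)) (b : 'cV[R]_r) (x : 'cV[R]_n) :=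
  exists (u : 'cV[R]_n) (w : 'cV[R]_m) (z : 'cV[R]_r),
    [/\ csubdiff f x u, csubdiff g (A *m x)%R w,
        subdiff_Phi_plus (B *m x - b)%R z &
        (u + A^T *m w + B^T *m z = 0)%R].

Definition Jbar n r (B : 'M[R]_(r, n)) (b : 'cV[R]_r) (xs : 'cV[R]_n)
  (i : 'I_r) : bool := ((B *m xs - b) i ord0 == 0)%R.

Definition feasible_Pplus n r (B : 'M[R]_(r, n)) (b : 'cV[R]_r)
  (xs x : 'cV[R]_n) :=
  forall i, Jbar B b xs i -> ((B *m x - b) i ord0 <= 0)%R.

(* KKT point of (P_+): the multiplier zeta in R^{|Jbar*|} is encoded as a
   vector of R^r vanishing outside Jbar*, so that B^T zeta = B_{Jbar*:}^T zeta. *)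
Definition KKT_Pplus n m r (f : 'cV[R]_n -> \bar R) (g : 'cV[R]_m -> \bar R)
  (A : 'M[R]_(m, n)) (B : 'M[R]_(r, n)) (b : 'cV[R]_r) (xs x : 'cV[R]_n) :=
  exists (u : 'cV[R]_n) (w : 'cV[R]_m) (zeta : 'cV[R]_r),
    [/\ csubdiff f x u, csubdiff g (A *m x)%R w,
        (u + A^T *m w + B^T *m zeta = 0)%R,
        (forall i, ~~ Jbar B b xs i -> zeta i ord0 = 0%R) &
        (forall i, Jbar B b xs i ->
           [/\ (0 <= zeta i ord0)%R, ((B *m x - b) i ord0 <= 0)%R &
               (zeta i ord0 * (B *m x - b) i ord0 = 0)%R])].

Definition local_min n (F : 'cV[R]_n -> \bar R) (xs : 'cV[R]_n) :=
  \forall y \near xs, F xs <= F y.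

Definition global_min_Pplus n m r (f : 'cV[R]_n -> \bar R)
  (g : 'cV[R]_m -> \bar R) (A : 'M[R]_(m, n)) (B : 'M[R]_(r, n))
  (b : 'cV[R]_r) (xs x : 'cV[R]_n) :=
  feasible_Pplus B b xs x /\
  forall y, feasible_Pplus B b xs y -> Theta f g A x <= Theta f g A y.

End Defs.

(* Main.v *)
Require Import Defs.
From HB Require Import structures.
From mathcomp Require Import all_boot all_order all_algebra.
From mathcomp Require Import all_classical all_reals all_analysis.
From mathcomp Require Import ring lra.
Import Order.TTheory GRing.Theory Num.Theory.
Import numFieldNormedType.Exports.
Local Open Scope ring_scope.
Lemma sum_cont (R : realType) (T : topologicalType) (I : Type) (s : seq I)
  (F : I -> T -> R) : (forall k, continuous (F k)) ->
  continuous (fun x => \sum_(k <- s) F k x).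
Proof.
move=> H; elim: s => [|a s IH].
  under eq_fun do rewrite big_nil. exact: cst_continuous.
under eq_fun do rewrite big_cons.
by move=> x; apply: continuousD; [exact: H | exact: IH].
Qed.

Lemma mulmx_cont (R : realType) m n p (A : 'M[R]_(m, n)) :
  continuous (fun x : 'M[R]_(n, p) => A *m x).
Proof.
move=> x; apply/(@cvg_ballP _ _ _ _ (nbhs_filter x)) => e e0.
have H : forall i j, \forall y \near x, ball ((A *m x) i j) e ((A *m y) i j).
  move=> i j.
  have hc : continuous (fun y : 'M[R]_(n,p) => (A *m y) i j).
    have -> : (fun y : 'M[R]_(n,p) => (A *m y) i j) =
      (fun y => \sum_(k <- index_enum 'I_n) (fun k (y : 'M[R]_(n,p)) => A i k * y k j) k y).
      by apply/funext => y; rewrite mxE.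
    apply: sum_cont => k z; apply: continuousM.
      exact: cst_continuous.
    exact: coord_continuous.
  exact: ((@cvg_ballP _ _ _ _ (nbhs_filter x) _ _).1 (hc x) e e0).
have H2 := @filter_forall _ _ _ _ (nbhs_filter x) (fun i => @filter_forall _ _ _ _ (nbhs_filter x) (H i)).
apply: filterS H2 => y Hy /=.
by rewrite /ball /=; split.
Qed.

Arguments mulmx_cont {R m n p} A.

Section Helpers.
Variable R : realType.

Lemma entry_cont n r (B : 'M[R]_(r, n)) (b : 'cV[R]_r) i :
  continuous (fun x : 'cV[R]_n => (B *m x - b) i ord0).
Proof.
have -> : (fun x : 'cV[R]_n => (B *m x - b) i ord0) =
  (fun M : 'cV[R]_r => M i ord0) \o (fun x => B *m x - b).
  by apply/funext => x.
move=> x; apply: continuous_comp; last exact: coord_continuous.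
apply: continuousB; first exact: mulmx_cont.
exact: cst_continuous.
Qed.

Arguments entry_cont {n r} B b i.

Lemma sign_near n r (B : 'M[R]_(r, n)) (b : 'cV[R]_r) (xs : 'cV[R]_n) :
  \forall z \near xs, forall i, ~~ Jbar B b xs i ->
    (0 < (B *m z - b) i ord0) = (0 < (B *m xs - b) i ord0).
Proof.
apply: (@filter_forall _ _ _ _ (nbhs_filter xs)) => i.
case Ji: (Jbar B b xs i).
  by apply: nearW.
move: Ji; rewrite /Jbar => /negbT Ji.
have hc := entry_cont B b i xs.
case: (ltgtP 0 ((B *m xs - b) i ord0)) => h.
- have := @cvgr_gt _ _ _ (nbhs_filter xs) _ _ hc 0 h.
  by apply: filterS => z hz _; rewrite hz ?h.
- have := @cvgr_lt _ _ _ (nbhs_filter xs) _ _ hc 0 h.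
  by apply: filterS => z hz _; rewrite ltNge (ltW hz) ?ltNge ?(ltW h).
- by move: Ji; rewrite -h eqxx.
Qed.

Lemma Phi_feas n r (B : 'M[R]_(r, n)) (b lam : 'cV[R]_r) (xs z : 'cV[R]_n) :
  feasible_Pplus B b xs z ->
  (forall i, ~~ Jbar B b xs i ->
    (0 < (B *m z - b) i ord0) = (0 < (B *m xs - b) i ord0)) ->
  Phi_plus lam (B *m z - b) = Phi_plus lam (B *m xs - b).
Proof.
move=> hf hs; apply: eq_bigr => i _.
case Ji: (Jbar B b xs i); last by rewrite hs ?Ji.
have := hf i Ji; move: Ji; rewrite /Jbar => /eqP ->.
by rewrite ltxx => h; rewrite ltNge h.
Qed.

Lemma Phi_infeas n r (B : 'M[R]_(r, n)) (b lam : 'cV[R]_r) (xs z : 'cV[R]_n) i0 :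
  (forall i, 0 < lam i ord0) ->
  (forall i, ~~ Jbar B b xs i ->
    (0 < (B *m z - b) i ord0) = (0 < (B *m xs - b) i ord0)) ->
  Jbar B b xs i0 -> 0 < (B *m z - b) i0 ord0 ->
  Phi_plus lam (B *m xs - b) + lam i0 ord0 <= Phi_plus lam (B *m z - b).
Proof.
move=> hl hs Ji0 hz.
rewrite -lerBrDl /Phi_plus -sumrB (bigD1 i0) //=.
move: (Ji0); rewrite /Jbar => /eqP ->; rewrite ltxx hz subr0 lerDl.
apply: sumr_ge0 => i _.
case Ji: (Jbar B b xs i); last by rewrite hs ?Ji // subrr.
move: Ji; rewrite /Jbar => /eqP ->; rewrite ltxx subr0.
by case: ifP => // _; exact: ltW.
Qed.

Local Open Scope ereal_scope.

Lemma fin_of (a c : \bar R) : a != -oo -> c != -oo -> a + c < +oo ->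
  exists x y, a = x%:E /\ c = y%:E.
Proof. by case: a => [x| |]; case: c => [y| |] //= *; exists x, y. Qed.

Lemma theta_lsc n m (f : 'cV[R]_n -> \bar R) (g : 'cV[R]_m -> \bar R)
  (A : 'M[R]_(m, n)) (xs : 'cV[R]_n) fx gx (a : R) :
  lower_semicontinuous f -> lower_semicontinuous g ->
  f xs = fx%:E -> g (A *m xs) = gx%:E -> (a < fx + gx)%R ->
  \forall z \near xs, a%:E < Theta f g A z.
Proof.
move=> lf lg Ef Eg ha.
pose d := ((fx + gx - a) / 2)%R.
have d0 : (0 < d)%R by rewrite /d divr_gt0 // subr_gt0.
have [V1 hV1 H1] : exists2 V, nbhs xs V & forall y, V y -> (fx - d)%:E < f y.
  by apply: lf; rewrite Ef lte_fin ltrBlDr ltrDl.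
have [V2 hV2 H2] : exists2 V, nbhs (A *m xs) V & forall y, V y -> (gx - d)%:E < g y.
  by apply: lg; rewrite Eg lte_fin ltrBlDr ltrDl.
have hV2' : nbhs xs (fun z : 'cV[R]_n => V2 (A *m z)) := mulmx_cont A xs _ hV2.
apply: (@filterS2 'cV[R]_n (nbhs xs) (nbhs_filter xs) V1 (fun z : 'cV[R]_n => V2 (A *m z))
  (fun z : 'cV[R]_n => a%:E < Theta f g A z) _ hV1 hV2') => z z1 z2.
have := lteD (H1 _ z1) (H2 _ z2).
by rewrite -EFinD /Theta; congr (_ < _); congr (_%:E); rewrite /d; field.
Qed.

End Helpers.

Arguments fin_of {R a c}.
Arguments theta_lsc {R n m f g A xs fx gx a}.
Arguments Phi_infeas {R n r B b lam xs z i0}.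
Arguments Phi_feas {R n r B b} lam {xs z}.
Arguments sign_near {R n r} B b xs.

Lemma comb_entry (R : realType) r (u v : 'cV[R]_r) (t : R) i :
  (t *: u + (1 - t) *: v) i ord0 = t * u i ord0 + (1 - t) * v i ord0.
Proof. by rewrite !mxE. Qed.

Local Open Scope ereal_scope.

Theorem mainTheorem10 (R : realType) (n m r : nat)
  (f : 'cV[R]_n -> \bar R) (g : 'cV[R]_m -> \bar R)
  (A : 'M[R]_(m, n)) (B : 'M[R]_(r, n)) (b lam : 'cV[R]_r)
  (xs : 'cV[R]_n) :
  proper_fun f -> lower_semicontinuous f -> convex_efun f ->
  proper_fun g -> lower_semicontinuous g -> convex_efun g ->
  (forall i, 0 < lam i ord0)%R ->
  Theta f g A xs < +oo ->
  (stationary f g A B b xs <-> KKT_Pplus f g A B b xs xs) /\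
  (local_min (Fobj f g A B b lam) xs <-> global_min_Pplus f g A B b xs xs).
Proof.
move=> [pf _] lf cf [pg _] lg cg hl hT.
split.
  split.
    case=> u [w [z [hu hw hz heq]]]; exists u, w, z; split => //.
      move=> i Ji; have := hz i; move: Ji; rewrite /Jbar => /negbTE ->.
      by move/eqP.
    move=> i Ji; have := hz i; move: (Ji); rewrite /Jbar => /eqP ->.
    by rewrite eqxx => h; split => //; rewrite mulr0.
  case=> u [w [z [hu hw heq hz0 hzJ]]]; exists u, w, z; split => // i.
  case Ji: ((B *m xs - b)%R i ord0 == 0%R).
    by have [] := hzJ i Ji.
  by apply/eqP; apply: hz0; rewrite /Jbar Ji.
have [fx [gx [Ef Eg]]] := fin_of (pf xs) (pg (A *m xs)) hT.
have ET : Theta f g A xs = (fx + gx)%:E by rewrite /Theta Ef Eg.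
have hS := sign_near B b xs.
split.
- move=> hloc; split.
    by move=> i /eqP ->.
  move=> y hy.
  have hP := @filterS2 _ _ (nbhs_filter xs) _ _ _ (fun z (a : Fobj f g A B b lam xs <= Fobj f g A B b lam z) (c : forall i, ~~ Jbar B b xs i ->
    (0 < (B *m z - b) i ord0)%R = (0 < (B *m xs - b) i ord0)%R) => conj a c) hloc hS.
  have [e /= e0 he] := (nbhs_ballP _ _).1 hP.
  have [hTy|] := ltP (Theta f g A y) +oo; last first.
    by rewrite leye_eq => /eqP ->; rewrite leey.
  have [fy [gy [Efy Egy]]] := fin_of (pf y) (pg (A *m y)) hTy.
  pose d := `|y - xs|%R.
  have d0 : (0 <= d)%R by rewrite /d normr_ge0.
  pose t := (e / (2 * (d + e)))%R.
  have D : (0 < 2 * (d + e))%R by move: e0 => /= e0; lra.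
  have t0 : (0 < t)%R by rewrite /t divr_gt0.
  have t1 : (t < 1)%R by rewrite /t ltr_pdivrMr // mul1r; lra.
  have htd : (t * d < e)%R.
    by rewrite /t mulrAC ltr_pdivrMr //; nra.
  pose z := (t *: y + (1 - t) *: xs)%R.
  have hz : ball xs e z.
    rewrite -ball_normE /ball_ /=.
    have -> : (xs - z = t *: (xs - y))%R.
      by apply/matrixP => i j; rewrite /z !mxE; ring.
    by rewrite normrZ ger0_norm ?(ltW t0) // distrC.
  have [hFz hsz] := he _ hz.
  have Ez : (B *m z - b = t *: (B *m y - b) + (1 - t) *: (B *m xs - b))%R.
    rewrite /z mulmxDr -!scalemxAr.
    by apply/matrixP => i j; rewrite !mxE; ring.
  have hfz : feasible_Pplus B b xs z.
    move=> i Ji; have := hy i Ji; move: Ji; rewrite /Jbar => /eqP h0 h.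
    rewrite Ez comb_entry h0 mulr0 addr0.
    exact: mulr_ge0_le0 (ltW t0) h.
  move: hFz; rewrite /Fobj (Phi_feas lam hfz hsz) leeD2rE // => hTz.
  have tt : (0 < t < 1)%R by rewrite t0 t1.
  have hcf := cf y xs t tt.
  have hcg := cg (A *m y) (A *m xs) t tt.
  have EAz : (A *m z = t *: (A *m y) + (1 - t) *: (A *m xs))%R.
    by rewrite /z mulmxDr -!scalemxAr.
  rewrite Efy Ef -!EFinM -EFinD in hcf.
  rewrite Egy Eg -!EFinM -EFinD -EAz in hcg.
  have := le_trans hTz (leeD hcf hcg).
  rewrite ET /Theta Efy Egy -!EFinD !lee_fin => hh.
  nra.
- move=> [_ hmin].
  have hN : \forall z \near xs, forall i,
      ((fx + gx - lam i ord0)%R)%:E < Theta f g A z.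
    apply: (@filter_forall _ _ _ _ (nbhs_filter xs)) => i.
    apply: (theta_lsc lf lg Ef Eg).
    by rewrite ltrBlDr ltrDl.
  apply: (@filterS2 _ _ (nbhs_filter xs) _ _ _ _ hS hN) => z hs hn.
  rewrite /Fobj ET.
  case: (boolP [exists i, Jbar B b xs i && (0 < (B *m z - b)%R i ord0)%R]).
    move=> /existsP [i /andP [Ji hi]].
    have hP := Phi_infeas hl hs Ji hi.
    have -> : ((fx + gx)%:E + (Phi_plus lam (B *m xs - b))%:E) =
      (fx + gx - lam i ord0)%:E + (Phi_plus lam (B *m xs - b) + lam i ord0)%:E.
      by rewrite -!EFinD; congr (_%:E); ring.
    by apply: leeD; [exact: ltW | rewrite lee_fin].
  move=> /existsPn hall.
  have hf : feasible_Pplus B b xs z.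
    by move=> i Ji; have := hall i; rewrite Ji /= -leNgt.
  rewrite (Phi_feas lam hf hs) -ET; apply: leeD => //.
  exact: hmin.
Qed.
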